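(* Let $y_0:A\to\Delta(B)$ satisfy $U^1(\mu_0,y_0)>U^1(\mu,y_0)$ for every $\mu\in\mathcal{M}\setminus\{\mu_0\}$ and $U^2(\mu_0,y_0)>v^2$; let $\bar y:A\to\Delta(B)$ satisfy $U^1(\mu_0,\bar y)\ge U^1(\mu,\bar y)$ for all $\mu\in\mathcal{M}$ and $U^2(\mu_0,\bar y)\ge v^2$; let $\varepsilon\in(0,1]$ and $y=\varepsilon y_0+(1-\varepsilon)\bar y$. Assume $\mathcal{M}$ has at least one extreme point different from $\mu_0$, and let $\mathcal{M}_e$ be the set of extreme points of $\mathcal{M}$, $c_1=\min_{\mu_e\in\mathcal{M}_e,\mu_e\neq\mu_0}\big(U^1(\mu_0,y_0)-U^1(\mu_e,y_0)\big)$ and $c_2=\max_{\mu_e\in\mathcal{M}_e,\mu_e\ne\mu_0}\|\mu_e-\mu_0\|_1$. Then for every $\mu\in\mathcal{M}$, $U^1(\mu_0,y)-U^1(\mu,y)\ge\frac{\varepsilon c_1}{c_2}\|\mu-\mu_0\|_1$.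
   Context: $S$ is finite, $A=S$, $B$ finite, $u=(u^1,u^2):S\times B\to\mathbb{R}^2$ extended linearly to mixed actions. $m\in\Delta(S)$ has full support. $\mathcal{M}\subset\Delta(S\times A)$ is the (polytope) set of distributions on $S\times A$ both of whose marginals equal $m$; $\mu_0(s,s)=m(s)$, $\mu_0(s,a)=0$ for $s\ne a$. For $\mu\in\mathcal{M}$ and $y:A\to\Delta(B)$, $U(\mu,y)=\sum_{s,a}\mu(s,a)u(s,y(\cdot\mid a))$; $v^2=\max_{b\in B}\sum_s m(s)u^2(s,b)$. *)

(* Defs.v *)
From mathcomp Require Import all_boot all_order all_algebra.
Set Implicit Arguments. Unset Strict Implicit. Unset Printing Implicit Defensive.
Import Order.TTheory GRing.Theory Num.Theory.
Local Open Scope ring_scope.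

Section Defs.
Variables (R : realFieldType) (S B : finType).

(* A = S.  A distribution on S x A is a function S -> S -> R. *)
Definition is_dist2 (mu : S -> S -> R) : Prop :=
  (forall s a, 0 <= mu s a) /\ \sum_(s : S) \sum_(a : S) mu s a = 1.

Definition inM (m : S -> R) (mu : S -> S -> R) : Prop :=
  is_dist2 mu /\
  (forall s, \sum_(a : S) mu s a = m s) /\
  (forall a, \sum_(s : S) mu s a = m a).

Definition mu0 (m : S -> R) : S -> S -> R :=
  fun s a => if s == a then m s else 0.

Definition is_strategy (y : S -> B -> R) : Prop :=
  forall a, (forall b, 0 <= y a b) /\ \sum_(b : B) y a b = 1.

Definition umix (ui : S -> B -> R) (s : S) (y : S -> B -> R) (a : S) : R :=
  \sum_(b : B) y a b * ui s b.

Definition U (ui : S -> B -> R) (mu : S -> S -> R) (y : S -> B -> R) : R :=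
  \sum_(s : S) \sum_(a : S) mu s a * umix ui s y a.

Definition l1dist (mu nu : S -> S -> R) : R :=
  \sum_(s : S) \sum_(a : S) `|mu s a - nu s a|.

Definition extreme_M (m : S -> R) (mu : S -> S -> R) : Prop :=
  inM m mu /\
  forall nu1 nu2 : S -> S -> R, forall t : R,
    inM m nu1 -> inM m nu2 -> 0 < t < 1 ->
    mu = (fun s a => t * nu1 s a + (1 - t) * nu2 s a) -> nu1 = nu2.

Definition is_v2 (m : S -> R) (u2 : S -> B -> R) (v : R) : Prop :=
  (exists b, v = \sum_(s : S) m s * u2 s b) /\
  (forall b, \sum_(s : S) m s * u2 s b <= v).

End Defs.

(* Main.v *)
Require Import Defs.
From mathcomp Require Import all_boot all_order all_algebra.
From Stdlib Require Import Classical FunctionalExtensionality.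
From mathcomp Require Import ring lra.
Import Order.TTheory GRing.Theory Num.Theory.
Local Open Scope ring_scope.

Lemma ex_min (R : realFieldType) (I : finType) (P : pred I) (F : I -> R) i0 :
  P i0 -> exists i, P i /\ forall j, P j -> F i <= F j.
Proof.
move=> Pi0.
case: (@extremumP R I (fun x y : R => x <= y) i0 P F (@le_refl _ _) (@le_trans _ _) (@le_total _ _) Pi0) => i Pi H.
by exists i; split.
Qed.

Section Conv.
Variables (R : realFieldType) (S : finType) (m : S -> R).

Definition comb (al : R) (p q : S -> S -> R) := fun s a => al * p s a + (1 - al) * q s a.
Definition supp (mu : S -> S -> R) := [set x : S * S | mu x.1 x.2 != 0].

Lemma total_of_rows (mu nu : S -> S -> R) : inM m mu -> (forall s, \sum_a nu s a = m s) ->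
  \sum_s \sum_a nu s a = 1.
Proof.
move=> [[_ h1] [hr _]] hn.
rewrite -h1; apply: eq_bigr => s _; by rewrite hn hr.
Qed.

Lemma decomp' (mu nu1 nu2 : S -> S -> R) t : inM m mu -> inM m nu1 -> inM m nu2 -> 0 < t < 1 ->
  mu = comb t nu1 nu2 -> nu1 <> nu2 ->
  exists p q al, [/\ inM m p, inM m q, 0 <= al <= 1, mu = comb al p q &
     (#|supp p| < #|supp mu|)%N /\ (#|supp q| < #|supp mu|)%N].
Proof.
move=> hmu h1 h2 /andP[t0 t1] emu hne.
pose d s a := nu1 s a - nu2 s a.
have [[mu_ge0 mu_sum] [mu_r mu_c]] := hmu.
have [[n1_ge0 n1_sum] [n1_r n1_c]] := h1.
have [[n2_ge0 n2_sum] [n2_r n2_c]] := h2.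
have hmuE s a : mu s a = t * nu1 s a + (1 - t) * nu2 s a by rewrite emu.
have dz s a : mu s a = 0 -> d s a = 0.
  move=> h0.
  have ha : 0 <= t * nu1 s a by rewrite mulr_ge0 // ltW.
  have hb : 0 <= (1 - t) * nu2 s a by rewrite mulr_ge0 // subr_ge0 ltW.
  have := h0; rewrite hmuE => /eqP; rewrite paddr_eq0 // => /andP[/eqP e1 /eqP e2].
  have z1 : nu1 s a = 0.
    by move: e1 => /eqP; rewrite mulf_eq0 (gt_eqF t0) /= => /eqP.
  have z2 : nu2 s a = 0.
    by move: e2 => /eqP; rewrite mulf_eq0 subr_eq0 (gt_eqF t1) /= => /eqP.
  by rewrite /d z1 z2 subrr.
have dr s : \sum_a d s a = 0 by rewrite /d sumrB n1_r n2_r subrr.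
have dc a : \sum_s d s a = 0 by rewrite /d sumrB n1_c n2_c subrr.
have dtot : \sum_(x : S * S) d x.1 x.2 = 0.
  by rewrite -(pair_big xpredT xpredT d) /=; rewrite big1 // => s _; exact: dr.
have [x0 hx0] : exists x : S * S, d x.1 x.2 != 0.
  apply: NNPP => hall; apply: hne.
  apply: functional_extensionality => s; apply: functional_extensionality => a.
  apply/eqP; rewrite -subr_eq0; apply/negPn/negP => h; apply: hall; by exists (s, a).
have [xp hxp] : exists x : S * S, 0 < d x.1 x.2.
  case: (pickP (fun x : S * S => 0 < d x.1 x.2)) => [x hx|hno]; first by exists x.
  exfalso; move: hx0; rewrite -oppr_eq0; apply/negP; rewrite negbK; apply/eqP.
  apply: (psumr_eq0P (P := xpredT) (F := fun x : S * S => - d x.1 x.2)) => //.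
    by move=> x _; rewrite oppr_ge0 leNgt hno.
  by rewrite sumrN dtot oppr0.
have [xn hxn] : exists x : S * S, d x.1 x.2 < 0.
  case: (pickP (fun x : S * S => d x.1 x.2 < 0)) => [x hx|hno]; first by exists x.
  exfalso; move: hx0; apply/negP; rewrite negbK; apply/eqP.
  apply: (psumr_eq0P (P := xpredT) (F := fun x : S * S => d x.1 x.2)) => //.
  by move=> x _; rewrite leNgt hno.
have mupos x : d x.1 x.2 != 0 -> 0 < mu x.1 x.2.
  move=> h; rewrite lt_def mu_ge0 andbT; apply/eqP => e; move: h; by rewrite dz // eqxx.
have [xs [hxs hmin]] := @ex_min R _ (fun x : S * S => 0 < d x.1 x.2) (fun x : S * S => mu x.1 x.2 / d x.1 x.2) xp hxp.
have [xt [hxt hmin']] := @ex_min R _ (fun x : S * S => d x.1 x.2 < 0) (fun x : S * S => mu x.1 x.2 / - d x.1 x.2) xn hxn.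
set sp := mu xs.1 xs.2 / d xs.1 xs.2.
set sn := mu xt.1 xt.2 / - d xt.1 xt.2.
have sp_gt0 : 0 < sp by rewrite /sp divr_gt0 // mupos // gt_eqF.
have sn_gt0 : 0 < sn by rewrite /sn divr_gt0 ?oppr_gt0 // mupos // lt_eqF.
pose p s a := mu s a - sp * d s a.
pose q s a := mu s a + sn * d s a.
have p_ge0 s a : 0 <= p s a.
  rewrite /p subr_ge0; case: (ltP 0 (d s a)) => hd.
    by rewrite -ler_pdivlMr // (hmin (s, a)).
  by apply: le_trans (mu_ge0 s a); rewrite pmulr_rle0.
have q_ge0 s a : 0 <= q s a.
  rewrite /q -(opprK (sn * d s a)) subr_ge0; case: (ltP (d s a) 0) => hd.
    by rewrite -mulrN -ler_pdivlMr ?oppr_gt0 // (hmin' (s, a)).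
  by apply: le_trans (mu_ge0 s a); rewrite oppr_le0 mulr_ge0 // ltW.
have pr s : \sum_a p s a = m s by rewrite /p sumrB -mulr_sumr dr mulr0 subr0.
have pc a : \sum_s p s a = m a by rewrite /p sumrB -mulr_sumr dc mulr0 subr0.
have qr s : \sum_a q s a = m s by rewrite /q big_split /= -mulr_sumr dr mulr0 addr0.
have qc a : \sum_s q s a = m a by rewrite /q big_split /= -mulr_sumr dc mulr0 addr0.
have hp : inM m p by split; [split=> //; exact: total_of_rows hmu pr | split].
have hq : inM m q by split; [split=> //; exact: total_of_rows hmu qr | split].
have spn : sp + sn != 0 by rewrite gt_eqF // addr_gt0.
exists p, q, (sn / (sp + sn)); split => //.
- apply/andP; split; first by rewrite divr_ge0 // ltW // addr_gt0.
  by rewrite ler_pdivrMr ?addr_gt0 // mul1r lerDr ltW.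
- apply: functional_extensionality => s; apply: functional_extensionality => a.
  rewrite /comb /p /q; field; exact: spn.
have sub_supp (f : S -> S -> R) c : (forall s a, f s a = mu s a + c * d s a) ->
    f xs.1 xs.2 = 0 \/ f xt.1 xt.2 = 0 -> (#|supp f| < #|supp mu|)%N.
  move=> hf hz; apply: proper_card; apply/properP; split.
    apply/subsetP => x; rewrite !inE => hx; apply/eqP => e; move: hx.
    by rewrite hf e dz // mulr0 addr0 eqxx.
  case: hz => hz; [exists xs | exists xt]; rewrite !inE ?hz ?eqxx // gt_eqF // mupos //.
    by rewrite gt_eqF.
  by rewrite lt_eqF.
split.
- apply: (sub_supp p (- sp)); first by move=> s a; rewrite /p; ring.
  left; rewrite /p /sp divfK ?subrr // gt_eqF //.
- apply: (sub_supp q sn) => //.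
  right; rewrite /q /sn divrN mulNr divfK ?subrr // lt_eqF //.
Qed.


Lemma conv_ind (F : (S -> S -> R) -> R)
 (hF : forall p q al, inM m p -> inM m q -> 0 <= al <= 1 ->
    al * F p + (1 - al) * F q <= F (comb al p q))
 (hE : forall mu, extreme_M m mu -> 0 <= F mu) :
 forall mu, inM m mu -> 0 <= F mu.
Proof.
suff H : forall n mu, inM m mu -> (#|supp mu| < n)%N -> 0 <= F mu.
  by move=> mu hmu; exact: (H _ mu hmu (ltnSn _)).
elim=> [//|n IH] mu hmu hn.
case: (classic (extreme_M m mu)) => [hx|hnx]; first exact: hE.
case: (boolP (0 <= F mu)) => // hneg; exfalso; apply: hnx.
split => // nu1 nu2 t h1 h2 ht e; apply: NNPP => hne.
have [p [q [al [hp hq hal emu [sp sq]]]]] := @decomp' mu nu1 nu2 t hmu h1 h2 ht e hne.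
move/negP: hneg; apply; rewrite emu; apply: le_trans (hF _ _ _ hp hq hal).
have Fp := IH p hp (leq_trans sp (ltnSE hn)).
have Fq := IH q hq (leq_trans sq (ltnSE hn)).
case/andP: hal => a0 a1.
by rewrite addr_ge0 // mulr_ge0 // subr_ge0.
Qed.

Lemma U_lin_mu (B : finType) (ui : S -> B -> R) al p q (yy : S -> B -> R) :
  U ui (comb al p q) yy = al * U ui p yy + (1 - al) * U ui q yy.
Proof.
rewrite /U !mulr_sumr -big_split; apply: eq_bigr => s _.
rewrite !mulr_sumr -big_split; apply: eq_bigr => a _.
rewrite /comb /=; ring.
Qed.

Lemma l1_conv al p q (n0 : S -> S -> R) : 0 <= al <= 1 ->
  l1dist (comb al p q) n0 <= al * l1dist p n0 + (1 - al) * l1dist q n0.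
Proof.
case/andP => a0 a1.
rewrite /l1dist !mulr_sumr -big_split; apply: ler_sum => s _.
rewrite !mulr_sumr -big_split; apply: ler_sum => a _.
rewrite (_ : comb al p q s a - n0 s a = al * (p s a - n0 s a) + (1 - al) * (q s a - n0 s a)); last by rewrite /comb /=; ring.
apply: le_trans (ler_normD _ _) _.
have b0 : 0 <= 1 - al by rewrite subr_ge0.
by rewrite normrM (ger0_norm a0) normrM (ger0_norm b0).
Qed.

End Conv.

Lemma U_lin_y (R : realFieldType) (S B : finType) (ui : S -> B -> R) (mu : S -> S -> R) e y1 y2 :
  U ui mu (fun a b => e * y1 a b + (1 - e) * y2 a b) = e * U ui mu y1 + (1 - e) * U ui mu y2.
Proof.
rewrite /U !mulr_sumr -big_split; apply: eq_bigr => s _.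
rewrite !mulr_sumr -big_split; apply: eq_bigr => a _ /=.
rewrite /umix.
have -> : \sum_b (e * y1 a b + (1 - e) * y2 a b) * ui s b =
   e * \sum_b y1 a b * ui s b + (1 - e) * \sum_b y2 a b * ui s b.
  rewrite !mulr_sumr -big_split; apply: eq_bigr => b _ /=; ring.
ring.
Qed.

Theorem lemma3 (R : realFieldType) (S B : finType)
  (u1 u2 : S -> B -> R) (m : S -> R)
  (hm_pos : forall s, 0 < m s) (hm_sum : \sum_(s : S) m s = 1)
  (v2 : R) (hv2 : is_v2 m u2 v2)
  (y0 ybar : S -> B -> R)
  (hy0 : is_strategy y0) (hybar : is_strategy ybar)
  (hy0_1 : forall mu, inM m mu -> mu <> mu0 m ->
             U u1 (mu0 m) y0 > U u1 mu y0)
  (hy0_2 : U u2 (mu0 m) y0 > v2)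
  (hybar_1 : forall mu, inM m mu -> U u1 (mu0 m) ybar >= U u1 mu ybar)
  (hybar_2 : U u2 (mu0 m) ybar >= v2)
  (eps : R) (heps : 0 < eps <= 1)
  (hext : exists mue, extreme_M m mue /\ mue <> mu0 m)
  (c1 c2 : R)
  (hc1 : (exists mue, [/\ extreme_M m mue, mue <> mu0 m &
            c1 = U u1 (mu0 m) y0 - U u1 mue y0]) /\
         (forall mue, extreme_M m mue -> mue <> mu0 m ->
            c1 <= U u1 (mu0 m) y0 - U u1 mue y0))
  (hc2 : (exists mue, [/\ extreme_M m mue, mue <> mu0 m &
            c2 = l1dist mue (mu0 m)]) /\
         (forall mue, extreme_M m mue -> mue <> mu0 m ->
            l1dist mue (mu0 m) <= c2)) :
  let y := fun a b => eps * y0 a b + (1 - eps) * ybar a b in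
  forall mu, inM m mu ->
    U u1 (mu0 m) y - U u1 mu y >= eps * c1 / c2 * l1dist mu (mu0 m).
Proof.
move=> y mu hmu.
have c1_ge0 : 0 <= c1.
  case: hc1 => [[mue [hx hne ->]] _]; rewrite subr_ge0 ltW //; apply: hy0_1 => //; by case: hx.
have c2_ge0 : 0 <= c2.
  case: hc2 => [[mue [_ _ ->]] _]; rewrite /l1dist; apply: sumr_ge0 => s _; apply: sumr_ge0 => a _.
  exact: normr_ge0.
set k := c1 / c2.
have k_ge0 : 0 <= k by rewrite /k divr_ge0.
have kc2 : k * c2 <= c1.
  have [->|c2n0] := eqVneq c2 0; first by rewrite mulr0.
  by rewrite /k divfK.
pose F (nu : S -> S -> R) := (U u1 (mu0 m) y0 - U u1 nu y0) - k * l1dist nu (mu0 m).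
have key : 0 <= F mu.
  apply: (@conv_ind R S m F) => //.
  - move=> p q al hp hq hal.
    have hl := @l1_conv R S al p q (mu0 m) hal.
    have hkl : k * l1dist (comb R S al p q) (mu0 m) <= k * (al * l1dist p (mu0 m) + (1 - al) * l1dist q (mu0 m)).
      by apply: ler_wpM2l.
    rewrite /F U_lin_mu.
    set Up := U u1 p y0 in hkl *; set Uq := U u1 q y0 in hkl *.
    set U0 := U u1 (mu0 m) y0.
    set lp := l1dist p (mu0 m) in hkl *; set lq := l1dist q (mu0 m) in hkl *.
    set lc := l1dist (comb R S al p q) (mu0 m) in hkl *.
    have -> : al * (U0 - Up - k * lp) + (1 - al) * (U0 - Uq - k * lq) =
      U0 - (al * Up + (1 - al) * Uq) - k * (al * lp + (1 - al) * lq) by ring.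
    by rewrite lerD2l lerN2.
  - move=> mue hx.
    case: (classic (mue = mu0 m)) => [->|hne].
      rewrite /F subrr /l1dist big1 ?mulr0 ?subr0 // => s _.
      by rewrite big1 // => a _; rewrite subrr normr0.
    rewrite /F subr_ge0.
    have h1 := hc1.2 mue hx hne.
    apply: le_trans h1.
    apply: le_trans kc2.
    by apply: ler_wpM2l => //; apply: hc2.2.
have hy : forall nu, U u1 nu y = eps * U u1 nu y0 + (1 - eps) * U u1 nu ybar.
  by move=> nu; rewrite /y U_lin_y.
rewrite !hy.
have gb := hybar_1 mu hmu.
case/andP: heps => e0 e1.
have hk : eps * c1 / c2 * l1dist mu (mu0 m) = eps * (k * l1dist mu (mu0 m)) by rewrite /k !mulrA.
rewrite hk.
have : eps * (k * l1dist mu (mu0 m)) <= eps * (U u1 (mu0 m) y0 - U u1 mu y0).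
  by apply: ler_wpM2l; [exact: ltW | rewrite -subr_ge0].
have : 0 <= (1 - eps) * (U u1 (mu0 m) ybar - U u1 mu ybar).
  by rewrite mulr_ge0 // subr_ge0.
move=> h1 h2; apply: le_trans h2 _.
rewrite -subr_ge0; apply: le_trans h1 _; rewrite le_eqVlt; apply/orP; left; apply/eqP; ring.
Qed.
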